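(* Let $k,l,N$ be positive integers with $l>1$, and let proper trigonometric polynomials $\mu_0,\dots,\mu_N$ and $\varphi_1,\dots,\varphi_N$ on $\mathbb{T}^2$ satisfy $$-\partial_1^k\varphi_1=\mu_0,\qquad \partial_2^l\varphi_j-\partial_1^k\varphi_{j+1}=\mu_j\ (j=1,\dots,N-1),\qquad \partial_2^l\varphi_N=\mu_N.$$ Then $$\sum_{j=1}^N\|\varphi_j\|_{W_2^{\frac{k-1}{2},0}(\mathbb{T}^2)}\leqslant C\sum_{j=0}^N\|\mu_j\|_{L^1(\mathbb{T}^2)},$$ where $C$ does not depend on the functions involved.
   Context: The torus is parametrised by $t\mapsto e^{2\pi it}$; $\partial_1,\partial_2$ are derivatives in the parameters; Fourier coefficients are $\hat f(m,n)$. A function is proper if $\hat f(m,n)=0$ whenever $m=0$ or $n=0$. For $\alpha,\beta\geqslant0$, $W_2^{\alpha,\beta}(\mathbb{T}^2)$ consists of distributions $f$ with $\{(1+m^2)^{\alpha/2}(1+n^2)^{\beta/2}\hat f(m,n)\}\in l^2(\mathbb{Z}^2)$, normed by the $l^2$-norm of this sequence. *)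

(* Defs.v *)
From Stdlib Require Import Reals ZArith List.
From Coquelicot Require Import Coquelicot.
Open Scope R_scope.

(* A function on T^2 is represented by its Fourier coefficients
   c m n = \hat f(m,n); a trigonometric polynomial is such a family
   vanishing outside a finite box [-M,M]^2. *)
Definition Coef := Z -> Z -> C.

Definition zrange (M : nat) : list Z :=
  map (fun i => (Z.of_nat i - Z.of_nat M)%Z) (seq 0 (2 * M + 1)).

Definition boxsumR (M : nat) (g : Z -> Z -> R) : R :=
  fold_right Rplus 0 (map (fun m => fold_right Rplus 0 (map (fun n => g m n) (zrange M))) (zrange M)).

Definition boxsumC (M : nat) (g : Z -> Z -> C) : C :=
  fold_right Cplus (RtoC 0) (map (fun m => fold_right Cplus (RtoC 0) (map (fun n => g m n) (zrange M))) (zrange M)).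

Definition supported (M : nat) (c : Coef) : Prop :=
  forall m n, (Z.of_nat M < Z.abs m)%Z \/ (Z.of_nat M < Z.abs n)%Z -> c m n = RtoC 0.

Definition proper (c : Coef) : Prop :=
  forall m n, m = 0%Z \/ n = 0%Z -> c m n = RtoC 0.

Definition cexpi (t : R) : C := (cos t, sin t).

(* the trigonometric polynomial with coefficients c (supported in the box),
   evaluated at the point (e^{2 pi i x}, e^{2 pi i y}) *)
Definition trig_eval (M : nat) (c : Coef) (x y : R) : C :=
  boxsumC M (fun m n => Cmult (c m n) (cexpi (2 * PI * (IZR m * x + IZR n * y)))).

Fixpoint Cpown (z : C) (k : nat) : C :=
  match k with O => RtoC 1 | S k' => Cmult z (Cpown z k') end.

(* derivatives in the parameters, on Fourier coefficients:
   \hat{\partial_1^k f}(m,n) = (2 pi i m)^k \hat f(m,n), etc. *)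
Definition dpar1 (k : nat) (c : Coef) : Coef :=
  fun m n => Cmult (Cpown (0, 2 * PI * IZR m) k) (c m n).
Definition dpar2 (l : nat) (c : Coef) : Coef :=
  fun m n => Cmult (Cpown (0, 2 * PI * IZR n) l) (c m n).

(* L^1(T^2) norm (T^2 has measure 1 in the parameters (x,y) in [0,1]^2) *)
Definition L1norm (M : nat) (c : Coef) : R :=
  RInt (fun x => RInt (fun y => Cmod (trig_eval M c x y)) 0 1) 0 1.

Definition Wnorm (M : nat) (alpha beta : R) (c : Coef) : R :=
  sqrt (boxsumR M (fun m n =>
     Rpower (1 + IZR m ^ 2) alpha * Rpower (1 + IZR n ^ 2) beta * (Cmod (c m n)) ^ 2)).

Definition sumR (a b : nat) (f : nat -> R) : R :=
  fold_right Rplus 0 (map f (seq a (S b - a))).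

(* Main.v *)
Require Import Defs.
From Stdlib Require Import Reals ZArith List.
From Coquelicot Require Import Coquelicot.
From Stdlib Require Import Lia Lra Psatz.
Open Scope R_scope.

Definition sumL {A} (L : list A) (g : A -> R) : R := fold_right Rplus 0 (map g L).

Lemma sumL_cons {A} (x : A) L g : sumL (x :: L) g = g x + sumL L g.
Proof. reflexivity. Qed.
Lemma sumL_nil {A} (g : A -> R) : sumL nil g = 0.
Proof. reflexivity. Qed.
Lemma sumL_app {A} (L1 L2 : list A) g : sumL (L1 ++ L2) g = sumL L1 g + sumL L2 g.
Proof. induction L1; unfold sumL in *; simpl; [ring|]. rewrite IHL1; ring. Qed.

Lemma sumL_le {A} (L : list A) g h : (forall i, In i L -> g i <= h i) -> sumL L g <= sumL L h.
Proof.
  induction L; intros H; unfold sumL; simpl; [lra|].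
  apply Rplus_le_compat. apply H; simpl; auto. apply IHL; intros; apply H; simpl; auto.
Qed.
Lemma sumL_ext {A} (L : list A) g h : (forall i, In i L -> g i = h i) -> sumL L g = sumL L h.
Proof.
  induction L; intros H; unfold sumL; simpl; [lra|].
  rewrite H by (simpl; auto). f_equal. apply IHL; intros; apply H; simpl; auto.
Qed.
Lemma sumL_plus {A} (L : list A) g h : sumL L (fun i => g i + h i) = sumL L g + sumL L h.
Proof. induction L; unfold sumL in *; simpl; [ring|]. rewrite IHL; ring. Qed.
Lemma sumL_scal {A} (L : list A) g c : sumL L (fun i => c * g i) = c * sumL L g.
Proof. induction L; unfold sumL in *; simpl; [ring|]. rewrite IHL; ring. Qed.
Lemma sumL_zero {A} (L : list A) : sumL L (fun _ => 0) = 0.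
Proof. induction L; unfold sumL in *; simpl; [ring|]. rewrite IHL; ring. Qed.
Lemma sumL_nonneg {A} (L : list A) g : (forall i, In i L -> 0 <= g i) -> 0 <= sumL L g.
Proof. intros H. rewrite <- (sumL_zero L). apply sumL_le; auto. Qed.
Lemma sumL_swap {A B} (L1 : list A) (L2 : list B) g :
  sumL L1 (fun i => sumL L2 (fun j => g i j)) = sumL L2 (fun j => sumL L1 (fun i => g i j)).
Proof.
  induction L1. simpl. rewrite sumL_nil. symmetry; apply sumL_zero.
  rewrite sumL_cons, IHL1. rewrite <- sumL_plus. apply sumL_ext. intros; rewrite sumL_cons; ring.
Qed.
Lemma sumL_delta (L : list Z) (a : Z -> R) m0 : NoDup L -> In m0 L ->
  sumL L (fun m => if Z.eq_dec (m - m0) 0 then a m else 0) = a m0.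
Proof.
  induction L; intros Hd Hi. destruct Hi.
  inversion Hd; subst. rewrite sumL_cons. destruct (Z.eq_dec (a0 - m0) 0).
  - assert (a0 = m0) by lia. subst. rewrite (sumL_ext _ _ (fun _ => 0)). rewrite sumL_zero; ring.
    intros i Hi'. destruct (Z.eq_dec (i - m0) 0); auto. assert (i = m0) by lia. subst; contradiction.
  - destruct Hi. lia. rewrite IHL; auto. ring.
Qed.

Lemma zrange_S M : zrange (S M) = (- Z.of_nat (S M))%Z :: zrange M ++ (Z.of_nat (S M) :: nil).
Proof.
  unfold zrange. replace (2 * S M + 1)%nat with (S ((2 * M + 1) + 1)) by lia.
  rewrite <- cons_seq. rewrite seq_app. rewrite map_cons, map_app. simpl map at 3.
  f_equal. rewrite <- seq_shift. rewrite map_map. f_equal.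
  - apply map_ext. intros; lia.
  - cbn [seq map]. f_equal. lia.
Qed.
Lemma zrange_in M m : In m (zrange M) <-> (Z.abs m <= Z.of_nat M)%Z.
Proof.
  unfold zrange. rewrite in_map_iff. split.
  - intros [i [Hi Hs]]. apply in_seq in Hs. lia.
  - intros H. exists (Z.to_nat (m + Z.of_nat M)). split. lia. apply in_seq. lia.
Qed.
Lemma zrange_nodup M : NoDup (zrange M).
Proof.
  unfold zrange. apply NoDup_map_NoDup_ForallPairs; [|apply seq_NoDup].
  intros a b _ _ H. lia.
Qed.

Lemma sum_zrange_abs M (h : nat -> R) :
  sumL (zrange M) (fun m => h (Z.abs_nat m)) = h 0%nat + 2 * sumL (seq 1 M) h.
Proof.
  induction M. simpl. unfold sumL; simpl. ring.
  rewrite zrange_S, sumL_cons, sumL_app, IHM, sumL_cons, sumL_nil.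
  rewrite seq_S, sumL_app, sumL_cons, sumL_nil.
  replace (Z.abs_nat (- Z.of_nat (S M))) with (1 + M)%nat by lia.
  replace (Z.abs_nat (Z.of_nat (S M))) with (1 + M)%nat by lia. ring.
Qed.

Lemma tele1 (k : nat) (B : R) M : (1 <= k)%nat -> 0 < B ->
  sumL (seq 1 M) (fun p => INR p ^ (k - 1) / (INR p ^ k + B) ^ 2)
  <= / B - / (INR M ^ k + B).
Proof.
  intros Hk HB. induction M.
  - simpl. rewrite sumL_nil. destruct k. lia. simpl. replace (0 * 0 ^ k + B) with B by ring. lra.
  - rewrite seq_S, sumL_app, sumL_cons, sumL_nil.
    replace (1 + M)%nat with (S M) by lia.
    set (Y := INR M ^ k). set (X := INR (S M) ^ k). set (Z0 := INR (S M) ^ (k - 1)).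
    assert (HY : 0 <= Y) by (apply pow_le, pos_INR).
    assert (HYX : Y <= X) by (apply pow_incr; split; [apply pos_INR | rewrite S_INR; lra]).
    assert (HZ : Z0 <= X - Y).
    { unfold X, Y, Z0. destruct k. lia. replace (S k - 1)%nat with k by lia.
      rewrite <- !tech_pow_Rmult. assert (INR M ^ k <= INR (S M) ^ k) by (apply pow_incr; split; [apply pos_INR | rewrite S_INR; lra]).
      rewrite S_INR in *. assert (0 <= INR M) by apply pos_INR. nra. }
    assert (Z0 / (X + B) ^ 2 <= / (Y + B) - / (X + B)).
    { assert (0 <= Z0) by (apply pow_le, pos_INR).
      apply (Rmult_le_reg_r ((X+B)^2 * (Y+B))). apply Rmult_lt_0_compat; nra.
      field_simplify; [|lra|lra]. nra. }
    eapply Rle_trans; [apply Rplus_le_compat; [exact IHM | rewrite Rplus_0_r; exact H]|]. unfold Y. apply Req_le; ring.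
Qed.

Lemma aux_inv t : 1 <= t -> / t ^ 2 <= 2 / t - 2 / (t + 1).
Proof.
  intros Ht. replace (2 / t - 2 / (t + 1)) with (2 * / (t * (t + 1))) by (field; lra).
  replace (/ t ^ 2) with (2 * / (2 * t ^ 2)) by (field; lra).
  apply Rmult_le_compat_l. lra. apply Rinv_le_contravar; nra.
Qed.

Lemma tele2 (l : nat) M : (2 <= l)%nat ->
  sumL (seq 1 M) (fun q => / INR q ^ l) <= 2 - 2 / (INR M + 1).
Proof.
  intros Hl. induction M.
  - simpl. rewrite sumL_nil. lra.
  - rewrite seq_S, sumL_app, sumL_cons, sumL_nil.
    replace (1 + M)%nat with (S M) by lia. rewrite S_INR in *.
    assert (HM : 0 <= INR M) by apply pos_INR.
    assert (H2 : (INR M + 1) ^ 2 <= (INR M + 1) ^ l).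
    { replace l with (2 + (l - 2))%nat by lia. rewrite pow_add.
      assert (1 <= (INR M + 1) ^ (l - 2)) by (apply pow_R1_Rle; lra). nra. }
    assert (/ (INR M + 1) ^ l <= 2 / (INR M + 1) - 2 / (INR M + 1 + 1)).
    { apply Rle_trans with (/ (INR M + 1) ^ 2). apply Rinv_le_contravar; nra.
      apply aux_inv; lra. }
    eapply Rle_trans; [apply Rplus_le_compat; [exact IHM | rewrite Rplus_0_r; exact H]|].
    apply Req_le; ring.
Qed.

Definition hh (k l : nat) (p q : nat) : R :=
  if (Nat.eqb p 0 || Nat.eqb q 0)%bool then 0 else INR p ^ (k - 1) / (INR p ^ k + INR q ^ l) ^ 2.

Lemma hh_box (k l : nat) M : (1 <= k)%nat -> (2 <= l)%nat ->
  boxsumR M (fun m n => hh k l (Z.abs_nat m) (Z.abs_nat n)) <= 8.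
Proof.
  intros Hk Hl.
  change (boxsumR M (fun m n => hh k l (Z.abs_nat m) (Z.abs_nat n))) with
    (sumL (zrange M) (fun m => sumL (zrange M) (fun n => hh k l (Z.abs_nat m) (Z.abs_nat n)))).
  rewrite (sum_zrange_abs M (fun p => sumL (zrange M) (fun n => hh k l p (Z.abs_nat n)))).
  rewrite sum_zrange_abs. unfold hh at 1. simpl Nat.eqb. cbv iota beta.
  rewrite (sumL_ext (seq 1 M) (fun x => sumL (zrange M) (fun n => hh k l x (Z.abs_nat n)))
             (fun x => 2 * sumL (seq 1 M) (fun q => hh k l x q))).
  2:{ intros. rewrite sum_zrange_abs. unfold hh at 1. rewrite Nat.eqb_refl, Bool.orb_true_r. rewrite Rplus_0_l. reflexivity. }
  rewrite sumL_scal, sumL_swap.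
  assert (sumL (seq 1 M) (fun j => sumL (seq 1 M) (fun i => hh k l i j)) <= 2).
  { apply Rle_trans with (sumL (seq 1 M) (fun q => / INR q ^ l)).
    - apply sumL_le. intros q Hq. apply in_seq in Hq.
      assert (HB : 0 < INR q ^ l) by (apply pow_lt, lt_0_INR; lia).
      apply Rle_trans with (sumL (seq 1 M) (fun p => INR p ^ (k - 1) / (INR p ^ k + INR q ^ l) ^ 2)).
      + apply Req_le, sumL_ext. intros p Hp. apply in_seq in Hp. unfold hh.
        replace (Nat.eqb p 0) with false by (symmetry; apply Nat.eqb_neq; lia).
        replace (Nat.eqb q 0) with false by (symmetry; apply Nat.eqb_neq; lia). reflexivity.
      + eapply Rle_trans. apply tele1; auto.
        assert (0 < / (INR M ^ k + INR q ^ l)).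
        { apply Rinv_0_lt_compat. assert (0 <= INR M ^ k) by (apply pow_le, pos_INR). lra. }
        lra.
    - eapply Rle_trans. apply tele2; auto. assert (0 < 2 / (INR M + 1)).
      { assert (0 <= INR M) by apply pos_INR. apply Rdiv_lt_0_compat; lra. } lra. }
  simpl orb. cbv iota. rewrite (sumL_ext _ (hh k l 0) (fun _ => 0)) by (intros; unfold hh; reflexivity). rewrite sumL_zero. lra.
Qed.

Lemma chain (N : nat) (A B Sm : R) (x : nat -> R) :
  0 < A -> 0 < B -> 0 <= Sm -> (forall j, 0 <= x j) ->
  A * x 1%nat <= Sm ->
  (forall j, (1 <= j)%nat -> (j <= N - 1)%nat -> A * x (S j) <= B * x j + Sm) ->
  (forall j, (1 <= j)%nat -> (j <= N - 1)%nat -> B * x j <= A * x (S j) + Sm) ->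
  B * x N <= Sm ->
  forall j, (1 <= j <= N)%nat -> x j * (A + B) <= 2 * INR N * Sm.
Proof.
  intros HA HB HS Hx H1 H2 H3 H4.
  destruct (Rle_dec B A) as [HBA|HAB].
  - assert (Hc : forall j, (1 <= j <= N)%nat -> A * x j <= INR j * Sm).
    { induction j as [|j IH]; intros Hj. lia.
      destruct j. simpl. lra.
      specialize (H2 (S j) ltac:(lia) ltac:(lia)).
      specialize (IH ltac:(lia)). specialize (Hx (S j)).
      rewrite S_INR. nra. }
    intros j Hj. specialize (Hc j Hj). specialize (Hx j).
    assert (INR j <= INR N) by (apply le_INR; lia). nra.
  - assert (Hc : forall i, (i <= N - 1)%nat -> B * x (N - i)%nat <= INR (S i) * Sm).
    { induction i as [|i IH]; intros Hi. replace (N - 0)%nat with N by lia. simpl. lra.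
      specialize (H3 (N - S i)%nat ltac:(lia) ltac:(lia)).
      replace (S (N - S i)) with (N - i)%nat in H3 by lia.
      specialize (IH ltac:(lia)). specialize (Hx (N - i)%nat).
      rewrite S_INR. nra. }
    intros j Hj. specialize (Hc (N - j)%nat ltac:(lia)).
    replace (N - (N - j))%nat with j in Hc by lia. specialize (Hx j).
    assert (INR (S (N - j)) <= INR N) by (apply le_INR; lia). nra.
Qed.

Lemma Cmod_Cpown z k : Cmod (Cpown z k) = Cmod z ^ k.
Proof. induction k; simpl. apply Cmod_1. rewrite Cmod_mult, IHk. ring. Qed.

Lemma Cmod_im t : Cmod (0, t) = Rabs t.
Proof. unfold Cmod; simpl. replace (0 ^ 2 + t ^ 2) with (t ^ 2) by ring. rewrite <- sqrt_Rsqr_abs. unfold Rsqr. f_equal. ring. Qed.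

Lemma Cmod_pow_im (m : Z) k :
  Cmod (Cpown (0, 2 * PI * IZR m) k) = (2 * PI * Rabs (IZR m)) ^ k.
Proof.
  rewrite Cmod_Cpown, Cmod_im, !Rabs_mult. rewrite (Rabs_right 2) by lra.
  rewrite (Rabs_right PI) by (left; apply PI_RGT_0). reflexivity.
Qed.

Lemma Rabs_IZR_INR (m : Z) : Rabs (IZR m) = INR (Z.abs_nat m).
Proof. rewrite <- abs_IZR, INR_IZR_INZ. f_equal. lia. Qed.

Lemma pow_2PI_ge (m : Z) k : INR (Z.abs_nat m) ^ k <= (2 * PI * Rabs (IZR m)) ^ k.
Proof.
  rewrite Rabs_IZR_INR. apply pow_incr. split. apply pos_INR.
  assert (0 <= INR (Z.abs_nat m)) by apply pos_INR. pose proof PI_RGT_0.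
  assert (1 <= PI). { pose proof PI2_1. lra. } nra.
Qed.

Lemma lip_cont (g : R -> R) K : 0 <= K -> (forall a b, Rabs (g a - g b) <= K * Rabs (a - b)) ->
  forall x, continuous g x.
Proof.
  intros HK Hl x. apply continuity_pt_filterlim. apply continuity_pt_locally. intros eps.
  assert (Hd : 0 < eps / (K + 1)). { apply Rdiv_lt_0_compat. apply cond_pos. lra. }
  exists (mkposreal _ Hd). intros y Hy. simpl in Hy.
  unfold ball in Hy; simpl in Hy; unfold AbsRing_ball, abs, minus, plus, opp in Hy; simpl in Hy.
  eapply Rle_lt_trans. apply Hl.
  apply Rle_lt_trans with (K * (eps / (K + 1))). apply Rmult_le_compat_l; [lra|]. replace (y - x) with (y + - x) by ring. lra.
  pose proof (cond_pos eps). apply (Rmult_lt_reg_r (K + 1)). lra.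
  field_simplify; lra.
Qed.

Lemma lip_int (g : R -> R) K : 0 <= K -> (forall a b, Rabs (g a - g b) <= K * Rabs (a - b)) ->
  forall a b, ex_RInt g a b.
Proof. intros. apply (ex_RInt_continuous (V := R_CompleteNormedModule)). intros; eapply lip_cont; eauto. Qed.

Lemma cos_lip a b : Rabs (cos a - cos b) <= Rabs (a - b).
Proof.
  destruct (MVT_abs cos (fun x => - sin x) b a) as [c [Hc _]].
  intros; apply derivable_pt_lim_cos. rewrite Hc. rewrite Rabs_Ropp.
  pose proof (SIN_bound c). assert (Rabs (sin c) <= 1) by (apply Rabs_le; lra).
  pose proof (Rabs_pos (a - b)). nra.
Qed.
Lemma sin_lip a b : Rabs (sin a - sin b) <= Rabs (a - b).
Proof.
  destruct (MVT_abs sin cos b a) as [c [Hc _]].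
  intros; apply derivable_pt_lim_sin. rewrite Hc.
  pose proof (COS_bound c). assert (Rabs (cos c) <= 1) by (apply Rabs_le; lra).
  pose proof (Rabs_pos (a - b)). nra.
Qed.

Lemma Cmod_le_abs (z : C) : Cmod z <= Rabs (fst z) + Rabs (snd z).
Proof.
  unfold Cmod. rewrite <- (sqrt_Rsqr (Rabs (fst z) + Rabs (snd z))).
  2: pose proof (Rabs_pos (fst z)); pose proof (Rabs_pos (snd z)); lra.
  apply sqrt_le_1_alt. unfold Rsqr.
  pose proof (Rabs_pos (fst z)); pose proof (Rabs_pos (snd z)).
  rewrite <- (pow2_abs (fst z)), <- (pow2_abs (snd z)). nra.
Qed.

Lemma cexpi_lip a b : Cmod (Cminus (cexpi a) (cexpi b)) <= 2 * Rabs (a - b).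
Proof.
  eapply Rle_trans. apply Cmod_le_abs. simpl.
  pose proof (cos_lip a b). pose proof (sin_lip a b).
  replace (cos a + - cos b) with (cos a - cos b) by ring.
  replace (sin a + - sin b) with (sin a - sin b) by ring. lra.
Qed.

Lemma Cmod_cexpi t : Cmod (cexpi t) = 1.
Proof. unfold Cmod, cexpi. simpl fst; simpl snd. replace (cos t ^ 2 + sin t ^ 2) with 1. apply sqrt_1.
  rewrite <- (sin2_cos2 t). unfold Rsqr. ring. Qed.

Definition sumLC {A} (L : list A) (g : A -> C) : C := fold_right Cplus (RtoC 0) (map g L).

Lemma Cmod_sumLC {A} (L : list A) g : Cmod (sumLC L g) <= sumL L (fun i => Cmod (g i)).
Proof.
  induction L; unfold sumLC, sumL in *; simpl. rewrite Cmod_0; lra.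
  eapply Rle_trans. apply Cmod_triangle. lra.
Qed.

Lemma sumLC_minus {A} (L : list A) g h :
  Cminus (sumLC L g) (sumLC L h) = sumLC L (fun i => Cminus (g i) (h i)).
Proof.
  induction L; unfold sumLC in *; simpl. apply injective_projections; simpl; ring.
  rewrite <- IHL. destruct (g a), (h a). destruct (fold_right Cplus (RtoC 0) (map g L)), (fold_right Cplus (RtoC 0) (map h L)).
  unfold Cminus, Cplus, Copp; simpl. apply injective_projections; simpl; ring.
Qed.

Lemma sumLC_mult {A} (L : list A) g w :
  Cmult (sumLC L g) w = sumLC L (fun i => Cmult (g i) w).
Proof.
  induction L; unfold sumLC in *; simpl. destruct w. apply injective_projections; simpl; ring.
  rewrite <- IHL. destruct (g a), w, (fold_right Cplus (RtoC 0) (map g L)).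
  apply injective_projections; simpl; ring.
Qed.

Lemma fst_sumLC {A} (L : list A) g : fst (sumLC L g) = sumL L (fun i => fst (g i)).
Proof. induction L; unfold sumLC, sumL in *; simpl; auto. rewrite IHL; auto. Qed.
Lemma snd_sumLC {A} (L : list A) g : snd (sumLC L g) = sumL L (fun i => snd (g i)).
Proof. induction L; unfold sumLC, sumL in *; simpl; auto. rewrite IHL; auto. Qed.

Lemma sumLC_ext {A} (L : list A) g h : (forall i, g i = h i) -> sumLC L g = sumLC L h.
Proof. intros H. unfold sumLC. f_equal. apply map_ext. auto. Qed.

Definition LipK (M : nat) (c : Coef) : R :=
  boxsumR M (fun m n => Cmod (c m n) * (4 * PI * (Rabs (IZR m) + Rabs (IZR n)))).

Lemma LipK_ge0 M c : 0 <= LipK M c.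
Proof.
  unfold LipK, boxsumR. change (0 <= sumL (zrange M) (fun m => sumL (zrange M) (fun n =>
     Cmod (c m n) * (4 * PI * (Rabs (IZR m) + Rabs (IZR n)))))).
  apply sumL_nonneg; intros; apply sumL_nonneg; intros. pose proof PI_RGT_0.
  pose proof (Cmod_ge_0 (c i i0)). pose proof (Rabs_pos (IZR i)). pose proof (Rabs_pos (IZR i0)).
  apply Rmult_le_pos; nra.
Qed.

Lemma trig_lip M c x y x' y' :
  Cmod (Cminus (trig_eval M c x y) (trig_eval M c x' y')) <= LipK M c * (Rabs (x - x') + Rabs (y - y')).
Proof.
  unfold trig_eval, boxsumC, LipK, boxsumR.
  change (Cmod (Cminus (sumLC (zrange M) (fun m => sumLC (zrange M) (fun n =>
           Cmult (c m n) (cexpi (2 * PI * (IZR m * x + IZR n * y))))))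
         (sumLC (zrange M) (fun m => sumLC (zrange M) (fun n =>
           Cmult (c m n) (cexpi (2 * PI * (IZR m * x' + IZR n * y')))))))
   <= sumL (zrange M) (fun m => sumL (zrange M) (fun n =>
       Cmod (c m n) * (4 * PI * (Rabs (IZR m) + Rabs (IZR n))))) * (Rabs (x - x') + Rabs (y - y'))).
  rewrite sumLC_minus. eapply Rle_trans. apply Cmod_sumLC.
  rewrite (Rmult_comm (sumL _ _)), <- sumL_scal. apply sumL_le. intros m _.
  rewrite sumLC_minus. eapply Rle_trans. apply Cmod_sumLC.
  rewrite <- sumL_scal. apply sumL_le. intros n _.
  replace (Cminus (Cmult (c m n) (cexpi (2 * PI * (IZR m * x + IZR n * y))))
    (Cmult (c m n) (cexpi (2 * PI * (IZR m * x' + IZR n * y')))))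
   with (Cmult (c m n) (Cminus (cexpi (2 * PI * (IZR m * x + IZR n * y))) (cexpi (2 * PI * (IZR m * x' + IZR n * y'))))).
  2:{ destruct (c m n). unfold cexpi. apply injective_projections; simpl; ring. }
  rewrite Cmod_mult. pose proof (Cmod_ge_0 (c m n)).
  eapply Rle_trans. apply Rmult_le_compat_l. auto. apply cexpi_lip.
  replace (2 * PI * (IZR m * x + IZR n * y) - 2 * PI * (IZR m * x' + IZR n * y'))
    with (2 * PI * (IZR m * (x - x') + IZR n * (y - y'))) by ring.
  pose proof PI_RGT_0.
  rewrite !Rabs_mult, (Rabs_right 2), (Rabs_right PI) by lra.
  assert (Rabs (IZR m * (x - x') + IZR n * (y - y')) <= (Rabs (IZR m) + Rabs (IZR n)) * (Rabs (x - x') + Rabs (y - y'))).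
  { eapply Rle_trans. apply Rabs_triang. rewrite !Rabs_mult.
    pose proof (Rabs_pos (IZR m)). pose proof (Rabs_pos (IZR n)). pose proof (Rabs_pos (x - x')). pose proof (Rabs_pos (y - y')). nra. }
  pose proof (Rabs_pos (IZR m)). pose proof (Rabs_pos (IZR n)).
  assert (0 <= Rabs (x - x') + Rabs (y - y')) by (pose proof (Rabs_pos (x - x')); pose proof (Rabs_pos (y - y')); lra).
  apply Rle_trans with (Cmod (c m n) * (4 * PI * ((Rabs (IZR m) + Rabs (IZR n)) * (Rabs (x - x') + Rabs (y - y'))))). apply Rmult_le_compat_l; [auto|nra]. right; ring.
Qed.

Lemma Cmod_lip (z w : C) : Rabs (Cmod z - Cmod w) <= Cmod (Cminus z w).
Proof.
  assert (Hz : Cmod z <= Cmod (Cminus z w) + Cmod w).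
  { replace z with (Cplus (Cminus z w) w) at 1 by (destruct z, w; apply injective_projections; simpl; ring).
    apply Cmod_triangle. }
  assert (Hw : Cmod w <= Cmod (Cminus z w) + Cmod z).
  { replace w with (Cplus (Copp (Cminus z w)) z) at 1 by (destruct z, w; apply injective_projections; simpl; ring).
    eapply Rle_trans. apply Cmod_triangle. rewrite Cmod_opp. lra. }
  apply Rabs_le. lra.
Qed.

Lemma inner_int M c x : ex_RInt (fun y => Cmod (trig_eval M c x y)) 0 1.
Proof.
  apply (lip_int _ (LipK M c)). apply LipK_ge0. intros a b.
  eapply Rle_trans. apply Cmod_lip. eapply Rle_trans. apply trig_lip.
  replace (x - x) with 0 by ring. rewrite Rabs_R0, Rplus_0_l. lra.
Qed.

Lemma outer_int M c : ex_RInt (fun x => RInt (fun y => Cmod (trig_eval M c x y)) 0 1) 0 1.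
Proof.
  apply (lip_int _ (LipK M c)). apply LipK_ge0. intros a b.
  assert (E : RInt (fun y => Cmod (trig_eval M c a y)) 0 1 - RInt (fun y => Cmod (trig_eval M c b y)) 0 1
     = RInt (fun y => Cmod (trig_eval M c a y) - Cmod (trig_eval M c b y)) 0 1).
  { symmetry. apply (RInt_minus (V := R_CompleteNormedModule)); apply inner_int. }
  rewrite E. eapply Rle_trans. apply abs_RInt_le. lra.
  { apply (ex_RInt_minus (V := R_CompleteNormedModule)); apply inner_int. }
  apply Rle_trans with (RInt (fun _ => LipK M c * Rabs (a - b)) 0 1).
  - apply RInt_le. lra.
    + apply ex_RInt_norm. apply (ex_RInt_minus (V := R_CompleteNormedModule)); apply inner_int.
    + apply ex_RInt_const.
    + intros y _. eapply Rle_trans. apply Cmod_lip. eapply Rle_trans. apply trig_lip.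
      replace (y - y) with 0 by ring. rewrite Rabs_R0, Rplus_0_r. lra.
  - rewrite RInt_const. unfold scal; simpl; unfold mult; simpl. lra.
Qed.

Lemma sin_2PIq (q : Z) : sin (2 * PI * IZR q) = 0.
Proof. apply sin_eq_0_1. exists (2 * q)%Z. rewrite mult_IZR. ring. Qed.
Lemma cos_2PIq (q : Z) : cos (2 * PI * IZR q) = 1.
Proof.
  replace (2 * PI * IZR q) with (2 * (IZR q * PI)) by ring. rewrite cos_2a_sin.
  rewrite sin_eq_0_1 by (exists q; reflexivity). ring.
Qed.

Lemma is_RInt_val (f : R -> R) a b l l' : is_RInt f a b l -> l = l' -> is_RInt f a b l'.
Proof. intros H E; subst; auto. Qed.

Lemma is_RInt_zero a b : is_RInt (fun _ : R => 0) a b 0.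
Proof. eapply is_RInt_val. apply (is_RInt_const (V := R_NormedModule)). unfold scal; simpl; unfold mult; simpl. ring. Qed.

Lemma int_trig P Q s (q : Z) (arg : R -> R) : (forall y, arg y = s + 2 * PI * IZR q * y) ->
  is_RInt (fun y => P * cos (arg y) + Q * sin (arg y)) 0 1
    (if Z.eq_dec q 0 then P * cos s + Q * sin s else 0).
Proof.
  intros Ha. destruct (Z.eq_dec q 0) as [Hq|Hq].
  - subst. apply is_RInt_ext with (f := fun _ => P * cos s + Q * sin s).
    + intros y _. rewrite Ha. replace (s + 2 * PI * IZR 0 * y) with s by (simpl; ring). reflexivity.
    + eapply is_RInt_val; [apply (is_RInt_const (V := R_NormedModule)) |].
      unfold scal; simpl; unfold mult; simpl. ring.
  - assert (Hb : 2 * PI * IZR q <> 0).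
    { apply Rmult_integral_contrapositive_currified. pose proof PI_RGT_0. lra. apply not_0_IZR; auto. }
    apply is_RInt_ext with (f := fun y => P * cos (s + 2 * PI * IZR q * y) + Q * sin (s + 2 * PI * IZR q * y)).
    intros y _. rewrite Ha. reflexivity.
    eapply is_RInt_val.
    + apply (is_RInt_derive (V := R_CompleteNormedModule)
         (fun y => (P * sin (s + 2 * PI * IZR q * y) - Q * cos (s + 2 * PI * IZR q * y)) / (2 * PI * IZR q))).
      { intros y0 _. auto_derive. auto. field. split; [apply not_0_IZR; auto | pose proof PI_RGT_0; lra]. }
      { intros y0 _. apply (ex_derive_continuous (K := R_AbsRing) (V := R_NormedModule)). auto_derive. auto. }
    + unfold minus, plus, opp; simpl.
      replace (s + 2 * PI * IZR q * 1) with (s + 2 * PI * IZR q) by ring.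
      replace (s + 2 * PI * IZR q * 0) with s by ring.
      rewrite sin_plus, cos_plus, sin_2PIq, cos_2PIq. field. split; [apply not_0_IZR; auto | pose proof PI_RGT_0; lra].
Qed.

Lemma is_RInt_sumL {A} (L : list A) (f : A -> R -> R) v a b :
  (forall i, In i L -> is_RInt (f i) a b (v i)) ->
  is_RInt (fun y => sumL L (fun i => f i y)) a b (sumL L v).
Proof.
  induction L; intros H. apply is_RInt_zero.
  apply (is_RInt_plus (V := R_NormedModule)). apply H; simpl; auto. apply IHL. intros; apply H; simpl; auto.
Qed.

Lemma L_le_Cmod u v (z : C) : u ^ 2 + v ^ 2 <= 1 -> u * fst z + v * snd z <= Cmod z.
Proof.
  intros Huv. unfold Cmod. destruct (Rle_dec (u * fst z + v * snd z) 0).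
  - pose proof (sqrt_pos (fst z ^ 2 + snd z ^ 2)). lra.
  - rewrite <- (sqrt_pow2 (u * fst z + v * snd z)) by lra. apply sqrt_le_1_alt.
    pose proof (pow2_ge_0 (fst z)). pose proof (pow2_ge_0 (snd z)).
    assert ((u * fst z + v * snd z) ^ 2 <= (u ^ 2 + v ^ 2) * (fst z ^ 2 + snd z ^ 2)).
    { pose proof (pow2_ge_0 (u * snd z - v * fst z)). nra. }
    nra.
Qed.

Section Main.
Variables (M : nat) (c : Coef) (m0 n0 : Z) (u v : R).

Definition th0 x y := 2 * PI * (IZR m0 * x + IZR n0 * y).
Definition Lterm x y :=
  u * fst (Cmult (trig_eval M c x y) (cexpi (- th0 x y))) + v * snd (Cmult (trig_eval M c x y) (cexpi (- th0 x y))).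
Definition PP m n := u * fst (c m n) + v * snd (c m n).
Definition QQ m n := v * fst (c m n) - u * snd (c m n).
Definition argf m n x y := 2 * PI * IZR (m - m0) * x + 2 * PI * IZR (n - n0) * y.

Lemma Lterm_eq x y : Lterm x y = sumL (zrange M) (fun m => sumL (zrange M) (fun n =>
   PP m n * cos (argf m n x y) + QQ m n * sin (argf m n x y))).
Proof.
  unfold Lterm, trig_eval, boxsumC.
  change (fold_right Cplus (RtoC 0) (map (fun m => fold_right Cplus (RtoC 0)
     (map (fun n => Cmult (c m n) (cexpi (2 * PI * (IZR m * x + IZR n * y)))) (zrange M))) (zrange M)))
   with (sumLC (zrange M) (fun m => sumLC (zrange M) (fun n => Cmult (c m n) (cexpi (2 * PI * (IZR m * x + IZR n * y)))))).
  rewrite sumLC_mult. rewrite fst_sumLC, snd_sumLC, <- !sumL_scal, <- sumL_plus.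
  apply sumL_ext. intros m _. rewrite sumLC_mult, fst_sumLC, snd_sumLC, <- !sumL_scal, <- sumL_plus.
  apply sumL_ext. intros n _. unfold PP, QQ, argf, th0.
  replace (2 * PI * IZR (m - m0) * x + 2 * PI * IZR (n - n0) * y) with
    (2 * PI * (IZR m * x + IZR n * y) + - (2 * PI * (IZR m0 * x + IZR n0 * y)))
    by (rewrite !minus_IZR; ring).
  set (a := 2 * PI * (IZR m * x + IZR n * y)). set (b := - (2 * PI * (IZR m0 * x + IZR n0 * y))).
  rewrite cos_plus, sin_plus. destruct (c m n) as [al be]. unfold cexpi, Cmult; simpl. ring.
Qed.

Definition Ival x := sumL (zrange M) (fun m => sumL (zrange M) (fun n =>
   if Z.eq_dec (n - n0) 0 then PP m n * cos (2 * PI * IZR (m - m0) * x) + QQ m n * sin (2 * PI * IZR (m - m0) * x) else 0)).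

Lemma inner_is x : is_RInt (fun y => Lterm x y) 0 1 (Ival x).
Proof.
  apply is_RInt_ext with (f := fun y => sumL (zrange M) (fun m => sumL (zrange M) (fun n =>
   PP m n * cos (argf m n x y) + QQ m n * sin (argf m n x y)))).
  { intros; symmetry; apply Lterm_eq. }
  unfold Ival. apply (is_RInt_sumL (zrange M) (fun m y => sumL (zrange M) (fun n =>
   PP m n * cos (argf m n x y) + QQ m n * sin (argf m n x y)))).
  intros m _. apply (is_RInt_sumL (zrange M) (fun n y =>
   PP m n * cos (argf m n x y) + QQ m n * sin (argf m n x y))).
  intros n _. apply (int_trig _ _ _ _ (fun y => argf m n x y)). intros; unfold argf; ring.
Qed.

Definition Vval := sumL (zrange M) (fun m => sumL (zrange M) (fun n =>
   if Z.eq_dec (n - n0) 0 then (if Z.eq_dec (m - m0) 0 then PP m n else 0) else 0)).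

Lemma outer_is : is_RInt Ival 0 1 Vval.
Proof.
  unfold Ival, Vval. apply (is_RInt_sumL (zrange M) (fun m x => sumL (zrange M) (fun n =>
   if Z.eq_dec (n - n0) 0 then PP m n * cos (2 * PI * IZR (m - m0) * x) + QQ m n * sin (2 * PI * IZR (m - m0) * x) else 0))).
  intros m _. apply (is_RInt_sumL (zrange M) (fun n x =>
   if Z.eq_dec (n - n0) 0 then PP m n * cos (2 * PI * IZR (m - m0) * x) + QQ m n * sin (2 * PI * IZR (m - m0) * x) else 0)).
  intros n _. destruct (Z.eq_dec (n - n0) 0).
  - eapply is_RInt_val. apply (int_trig _ _ 0 (m - m0) (fun x => 2 * PI * IZR (m - m0) * x)).
    intros; ring. destruct (Z.eq_dec (m - m0) 0); auto. rewrite cos_0, sin_0. rewrite Rmult_1_r, Rmult_0_r, Rplus_0_r. reflexivity.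
  - apply is_RInt_zero.
Qed.

Lemma Vval_eq : (Z.abs m0 <= Z.of_nat M)%Z -> (Z.abs n0 <= Z.of_nat M)%Z -> Vval = PP m0 n0.
Proof.
  intros Hm Hn. unfold Vval.
  rewrite (sumL_ext _ _ (fun m => if Z.eq_dec (m - m0) 0 then PP m n0 else 0)).
  - apply (sumL_delta _ (fun m => PP m n0)). apply zrange_nodup. apply zrange_in; auto.
  - intros m _. rewrite (sumL_delta _ (fun n => if Z.eq_dec (m - m0) 0 then PP m n else 0)).
    reflexivity. apply zrange_nodup. apply zrange_in; auto.
Qed.

Lemma main_uv : u ^ 2 + v ^ 2 <= 1 ->
  (Z.abs m0 <= Z.of_nat M)%Z -> (Z.abs n0 <= Z.of_nat M)%Z -> PP m0 n0 <= L1norm M c.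
Proof.
  intros Huv Hm Hn. rewrite <- Vval_eq by auto.
  assert (E : RInt (fun x => RInt (fun y => Lterm x y) 0 1) 0 1 = Vval).
  { apply is_RInt_unique. apply is_RInt_ext with (f := Ival).
    intros x _. symmetry. apply is_RInt_unique. apply inner_is. apply outer_is. }
  rewrite <- E. unfold L1norm. apply RInt_le. lra.
  - exists Vval. apply is_RInt_ext with (f := Ival).
    intros x _. symmetry. apply is_RInt_unique. apply inner_is. apply outer_is.
  - apply outer_int.
  - intros x _. apply RInt_le. lra. exists (Ival x). apply inner_is. apply inner_int.
    intros y _. unfold Lterm. eapply Rle_trans. apply L_le_Cmod; auto.
    rewrite Cmod_mult, Cmod_cexpi. lra.
Qed.
End Main.

Lemma coef_le_L1 M c m0 n0 : (Z.abs m0 <= Z.of_nat M)%Z -> (Z.abs n0 <= Z.of_nat M)%Z ->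
  Cmod (c m0 n0) <= L1norm M c.
Proof.
  intros Hm Hn. destruct (Req_dec (Cmod (c m0 n0)) 0) as [H0|H0].
  - rewrite H0. pose proof (main_uv M c m0 n0 0 0 ltac:(lra) Hm Hn). unfold PP in H. lra.
  - pose proof (Cmod_ge_0 (c m0 n0)). set (r := Cmod (c m0 n0)) in *.
    assert (Hr : r ^ 2 = fst (c m0 n0) ^ 2 + snd (c m0 n0) ^ 2).
    { unfold r, Cmod. rewrite pow2_sqrt; auto. pose proof (pow2_ge_0 (fst (c m0 n0))). pose proof (pow2_ge_0 (snd (c m0 n0))). lra. }
    assert (Huv : (fst (c m0 n0) / r) ^ 2 + (snd (c m0 n0) / r) ^ 2 <= 1).
    { right. field_simplify; auto. rewrite <- Hr. field. auto. }
    pose proof (main_uv M c m0 n0 _ _ Huv Hm Hn). unfold PP in H1.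
    replace (fst (c m0 n0) / r * fst (c m0 n0) + snd (c m0 n0) / r * snd (c m0 n0)) with r in H1; auto.
    field_simplify; auto. rewrite <- Hr. field. auto.
Qed.

Lemma sumL_ge_term {A} (L : list A) f j : (forall i, In i L -> 0 <= f i) -> In j L -> f j <= sumL L f.
Proof.
  induction L; intros H Hj. destruct Hj. rewrite sumL_cons. destruct Hj as [<-|Hj].
  - pose proof (sumL_nonneg L f ltac:(intros; apply H; simpl; auto)). lra.
  - pose proof (H a ltac:(simpl; auto)). pose proof (IHL ltac:(intros; apply H; simpl; auto) Hj). lra.
Qed.

Lemma sumL_const {A} (L : list A) c : sumL L (fun _ => c) = INR (length L) * c.
Proof. induction L; unfold sumL in *; cbn [length map fold_right]. simpl; ring. rewrite IHL, S_INR. ring. Qed.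

Lemma boxsum_le M g h : (forall m n, In m (zrange M) -> In n (zrange M) -> g m n <= h m n) ->
  boxsumR M g <= boxsumR M h.
Proof.
  intros H. unfold boxsumR.
  change (sumL (zrange M) (fun m => sumL (zrange M) (g m)) <= sumL (zrange M) (fun m => sumL (zrange M) (h m))).
  apply sumL_le; intros; apply sumL_le; intros; auto.
Qed.

Lemma boxsum_scal M g a : boxsumR M (fun m n => a * g m n) = a * boxsumR M g.
Proof.
  unfold boxsumR.
  change (sumL (zrange M) (fun m => sumL (zrange M) (fun n => a * g m n)) = a * sumL (zrange M) (fun m => sumL (zrange M) (g m))).
  rewrite <- sumL_scal. apply sumL_ext. intros. apply sumL_scal.
Qed.

Lemma Cminus_bounds z w r : Cminus z w = r -> Cmod w <= Cmod z + Cmod r /\ Cmod z <= Cmod w + Cmod r.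
Proof.
  intros H. split.
  - replace w with (Cplus z (Copp r)) by (subst; destruct z, w; apply injective_projections; simpl; ring).
    eapply Rle_trans. apply Cmod_triangle. rewrite Cmod_opp. lra.
  - replace z with (Cplus w r) by (subst; destruct z, w; apply injective_projections; simpl; ring).
    apply Cmod_triangle.
Qed.

Lemma weight_bound k (m : Z) : (1 <= k)%nat -> m <> 0%Z ->
  Rpower (1 + IZR m ^ 2) ((INR k - 1) / 2) <= 2 ^ (k - 1) * INR (Z.abs_nat m) ^ (k - 1).
Proof.
  intros Hk Hm. set (x := 1 + IZR m ^ 2).
  assert (Hx : 0 < x) by (unfold x; pose proof (pow2_ge_0 (IZR m)); lra).
  replace ((INR k - 1) / 2) with (/ 2 * INR (k - 1)) by (rewrite minus_INR by lia; simpl; field).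
  rewrite <- Rpower_mult, Rpower_sqrt by auto. rewrite Rpower_pow by (apply sqrt_lt_R0; auto).
  rewrite <- Rpow_mult_distr. apply pow_incr. split. apply sqrt_pos.
  set (p := INR (Z.abs_nat m)).
  assert (Hp : 1 <= p). { unfold p. replace 1 with (INR 1) by reflexivity. apply le_INR. lia. }
  assert (Hm2 : IZR m ^ 2 = p ^ 2). { unfold p. rewrite <- Rabs_IZR_INR. rewrite pow2_abs. reflexivity. }
  rewrite <- (sqrt_pow2 (2 * p)) by lra. apply sqrt_le_1_alt. unfold x. rewrite Hm2. nra.
Qed.

Theorem lemma10 :
  forall (k l N : nat), (0 < k)%nat -> (1 < l)%nat -> (0 < N)%nat ->
  exists Cst : R,
  forall (M : nat) (mu phi : nat -> Coef),
    (forall j, (j <= N)%nat -> supported M (mu j) /\ proper (mu j)) ->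
    (forall j, (1 <= j <= N)%nat -> supported M (phi j) /\ proper (phi j)) ->
    (forall m n, Copp (dpar1 k (phi 1%nat) m n) = mu 0%nat m n) ->
    (forall j, (1 <= j <= N - 1)%nat ->
       forall m n, Cminus (dpar2 l (phi j) m n) (dpar1 k (phi (S j)) m n) = mu j m n) ->
    (forall m n, dpar2 l (phi N) m n = mu N m n) ->
    sumR 1 N (fun j => Wnorm M ((INR k - 1) / 2) 0 (phi j))
      <= Cst * sumR 0 N (fun j => L1norm M (mu j)).
Proof.
  intros k l N Hk Hl HN.
  set (K1 := 4 * INR N ^ 2 * 2 ^ (k - 1) * 8).
  exists (INR N * sqrt K1).
  intros M mu phi Hmu Hphi H0 Hmid HNN.
  set (Sg := sumR 0 N (fun j => L1norm M (mu j))).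
  assert (L1pos : forall j, 0 <= L1norm M (mu j)).
  { intros j. eapply Rle_trans. apply (Cmod_ge_0 (mu j 0%Z 0%Z)). apply coef_le_L1; simpl; lia. }
  assert (HSg : 0 <= Sg). { unfold Sg, sumR. apply sumL_nonneg. intros; auto. }
  assert (Hmub : forall j m n, (j <= N)%nat -> (Z.abs m <= Z.of_nat M)%Z -> (Z.abs n <= Z.of_nat M)%Z ->
            Cmod (mu j m n) <= Sg).
  { intros j m n Hj Hm Hn. eapply Rle_trans. apply coef_le_L1; eauto.
    unfold Sg, sumR. apply (sumL_ge_term _ (fun j => L1norm M (mu j))). intros; auto.
    apply in_seq. lia. }
  assert (Hpt : forall j, (1 <= j <= N)%nat -> forall m n, In m (zrange M) -> In n (zrange M) ->
     Rpower (1 + IZR m ^ 2) ((INR k - 1) / 2) * Rpower (1 + IZR n ^ 2) 0 * Cmod (phi j m n) ^ 2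
     <= Sg ^ 2 * (4 * INR N ^ 2 * 2 ^ (k - 1)) * hh k l (Z.abs_nat m) (Z.abs_nat n)).
  { intros j Hj m n Hm Hn. apply zrange_in in Hm. apply zrange_in in Hn.
    rewrite Rpower_O by (pose proof (pow2_ge_0 (IZR n)); lra). rewrite Rmult_1_r.
    destruct (Z.eq_dec m 0) as [Em|Em].
    { rewrite (proj2 (Hphi j Hj) m n (or_introl Em)), Cmod_0.
      unfold hh. subst. simpl. nra. }
    destruct (Z.eq_dec n 0) as [En|En].
    { rewrite (proj2 (Hphi j Hj) m n (or_intror En)), Cmod_0.
      unfold hh. subst. rewrite Bool.orb_true_r. simpl. nra. }
    set (p := Z.abs_nat m). set (q := Z.abs_nat n).
    unfold hh. replace (Nat.eqb p 0) with false by (symmetry; apply Nat.eqb_neq; lia).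
    replace (Nat.eqb q 0) with false by (symmetry; apply Nat.eqb_neq; lia). simpl orb. cbv iota.
    set (A := Cmod (Cpown (0, 2 * PI * IZR m) k)). set (B := Cmod (Cpown (0, 2 * PI * IZR n) l)).
    assert (HA : INR p ^ k <= A). { unfold A. rewrite Cmod_pow_im. apply pow_2PI_ge. }
    assert (HB : INR q ^ l <= B). { unfold B. rewrite Cmod_pow_im. apply pow_2PI_ge. }
    assert (Hp0 : 0 < INR p ^ k) by (apply pow_lt, lt_0_INR; lia).
    assert (Hq0 : 0 < INR q ^ l) by (apply pow_lt, lt_0_INR; lia).
    assert (Hch : Cmod (phi j m n) * (A + B) <= 2 * INR N * Sg).
    { apply (chain N A B Sg (fun j => Cmod (phi j m n))); try lra; auto.
      - intros; apply Cmod_ge_0.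
      - eapply Rle_trans; [|apply (Hmub 0%nat m n); lia]. rewrite <- H0. unfold dpar1. rewrite Cmod_opp, Cmod_mult. right; reflexivity.
      - intros i Hi1 Hi2. pose proof (Cminus_bounds _ _ _ (Hmid i ltac:(lia) m n)) as [Hb1 Hb2].
        unfold dpar1, dpar2 in Hb1. rewrite !Cmod_mult in Hb1. pose proof (Hmub i m n ltac:(lia) Hm Hn).
        fold A B in Hb1. lra.
      - intros i Hi1 Hi2. pose proof (Cminus_bounds _ _ _ (Hmid i ltac:(lia) m n)) as [Hb1 Hb2].
        unfold dpar1, dpar2 in Hb2. rewrite !Cmod_mult in Hb2. pose proof (Hmub i m n ltac:(lia) Hm Hn).
        fold A B in Hb2. lra.
      - eapply Rle_trans; [|apply (Hmub N m n); lia]. rewrite <- HNN. unfold dpar2. rewrite Cmod_mult. right; reflexivity. }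
    set (D := INR p ^ k + INR q ^ l). set (x := Cmod (phi j m n)).
    assert (Hx : 0 <= x) by apply Cmod_ge_0.
    assert (HxD : x * D <= 2 * INR N * Sg). { eapply Rle_trans; [|exact Hch]. apply Rmult_le_compat_l. exact Hx. unfold D. lra. }
    assert (Hx2 : x ^ 2 <= (2 * INR N * Sg) ^ 2 / D ^ 2).
    { assert (0 < D) by (unfold D; lra).
      apply (Rmult_le_reg_r (D ^ 2)). nra. unfold Rdiv. rewrite Rmult_assoc, Rinv_l by (apply pow_nonzero; lra).
      rewrite Rmult_1_r. replace (x ^ 2 * D ^ 2) with ((x * D) ^ 2) by ring.
      apply pow_incr. nra. }
    pose proof (weight_bound k m ltac:(lia) Em) as Hw. fold p in Hw.
    assert (Hw0 : 0 <= Rpower (1 + IZR m ^ 2) ((INR k - 1) / 2)) by (left; apply exp_pos).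
    apply Rle_trans with (2 ^ (k - 1) * INR p ^ (k - 1) * ((2 * INR N * Sg) ^ 2 / D ^ 2)).
    - apply Rmult_le_compat; auto. apply pow2_ge_0.
    - right. fold D. field. unfold D; lra. }
  apply Rle_trans with (sumR 1 N (fun _ => Sg * sqrt K1)).
  - unfold sumR. apply sumL_le. intros j Hj. apply in_seq in Hj.
    unfold Wnorm. rewrite <- (sqrt_pow2 Sg) by auto. rewrite <- sqrt_mult by (try apply pow2_ge_0; unfold K1; pose proof (pos_INR N); pose proof (pow_le 2 (k-1) ltac:(lra)); nra).
    apply sqrt_le_1_alt. eapply Rle_trans. apply boxsum_le. apply Hpt. lia.
    rewrite boxsum_scal. unfold K1.
    pose proof (hh_box k l M ltac:(lia) ltac:(lia)).
    assert (0 <= Sg ^ 2 * (4 * INR N ^ 2 * 2 ^ (k - 1))).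
    { apply Rmult_le_pos; [apply pow2_ge_0|]. apply Rmult_le_pos; [|apply pow_le; lra]. apply Rmult_le_pos; [lra|apply pow2_ge_0]. }
    nra.
  - unfold sumR. change (sumL (seq 1 (S N - 1)) (fun _ => Sg * sqrt K1) <= INR N * sqrt K1 * Sg). rewrite sumL_const, length_seq. replace (S N - 1)%nat with N by lia.
    right. fold Sg. ring.
Qed.
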